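(* In the setting below, if $N\ge4$ then the $H$-skeleton $B=X^H$ is a $p$-robust random 0–1 matrix with $p=2/N$. Setting: $G$ is a graph on $N$ vertices with edges $e_1,\dots,e_m$; $G_k$ has the same vertices and edge set $\{e_1,\dots,e_k\}$; fix $0\le k\le m-1$, $S=\mathcal I(G_k)$, $H=\mathcal I(G_{k+1})$, and $n\ge1$. Initial states $A_1,\dots,A_n\in S$ have arbitrary joint distribution; for each $i\in[n]$ the BIDC chain on $G_k$ is run from $A_i$ for $n$ steps with fresh randomness independent across steps, chains and initial states, giving $X_{i0}=A_i,X_{i1},\dots,X_{in}$; $X$ is the $n\times n$ matrix with $i$-th row $(X_{i1},\dots,X_{in})$.
   Context: $\mathcal I(F)$ is the family of independent sets (including $\emptyset$) of a graph $F$. BIDC on $F=(V,E)$: from $X_t$ draw $u\in V$ uniformly; $X_{t+1}=X_t\setminus\{u\}$ if $u\in X_t$; $X_{t+1}=X_t\cup\{u\}$ if $u\notin X_t$ and $X_t\cup\{u\}\in\mathcal I(F)$; else $X_{t+1}=X_t$. The $H$-skeleton $X^H$ is the 0–1 matrix with entry $1$ iff $X_{ij}\in H$. In an $n\times n$ matrix, entry $(i,j)$ precedes $(k,\ell)$, written $(i,j)\prec(k,\ell)$, if $i<k$, or $i=k$ and $j<\ell$. A random 0–1 matrix $Y=[\xi_{ij}]$ is $p$-robust ($p\in(0,1)$) if for every $(i,j)$, every set of preceding positions $(i_1,j_1),\dots,(i_r,j_r)\prec(i,j)$ and every $a_1,\dots,a_r\in\{0,1\}$ with $\Pr(\xi_{i_1j_1}=a_1,\dots,\xi_{i_rj_r}=a_r)>0$,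 we have $\Pr(\xi_{ij}=1\mid \xi_{i_1j_1}=a_1,\dots,\xi_{i_rj_r}=a_r)\ge p$ (and $\Pr(\xi_{ij}=1)\ge p$ unconditionally). *)

(* Defs.v *)
From mathcomp Require Import all_boot all_order all_algebra.
Set Implicit Arguments. Unset Strict Implicit. Unset Printing Implicit Defensive.
Import Order.TTheory GRing.Theory Num.Theory.
Local Open Scope ring_scope.

(* A graph on vertex set 'I_N is given by its (ordered) list of edges,
   each edge a 2-element vertex set. [take k edges] is the edge list of G_k. *)
Definition indep (N : nat) (E : seq {set 'I_N}) (X : {set 'I_N}) : bool :=
  all (fun e : {set 'I_N} => ~~ (e \subset X)) E.

Definition bidc_step (N : nat) (E : seq {set 'I_N}) (X : {set 'I_N}) (u : 'I_N)
  : {set 'I_N} :=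
  if u \in X then X :\ u
  else if indep E (u |: X) then u |: X else X.

(* Sample space: initial states A (row i gives A_i) and the fresh uniform
   vertex choices u (u (i,l) is the vertex drawn at step l+1 of chain i). *)
Definition Omega (N n : nat) : finType :=
  ({ffun 'I_n -> {set 'I_N}} * {ffun 'I_n * 'I_n -> 'I_N})%type.

(* Entry X_{i,j+1} (j : 'I_n, i.e. the matrix entry in column j+1):
   the state of chain i after j+1 steps. *)
Definition Xent (N n : nat) (E : seq {set 'I_N}) (w : Omega N n)
  (i j : 'I_n) : {set 'I_N} :=
  foldl (fun (X : {set 'I_N}) (l : 'I_n) => bidc_step E X (w.2 (i, l))) (w.1 i)
        [seq l <- enum 'I_n | (nat_of_ord l <= nat_of_ord j)%N].

(* Probability of an event: A has law mu, u is uniform on 'I_N^(n*n),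
   independent of A. *)
Definition Pr (R : realFieldType) (N n : nat)
  (mu : {ffun {ffun 'I_n -> {set 'I_N}} -> R}) (Ev : pred (Omega N n)) : R :=
  \sum_(w : Omega N n) mu w.1 * (N%:R ^+ (n * n))^-1 * (Ev w)%:R.

Definition prec (n : nat) (a b : 'I_n * 'I_n) : bool :=
  (a.1 < b.1)%N || ((a.1 == b.1) && (a.2 < b.2)%N).

Definition p_robust (R : realFieldType) (T : finType) (n : nat)
  (P : pred T -> R) (xi : 'I_n -> 'I_n -> T -> bool) (p : R) : Prop :=
  (forall i j, p <= P (xi i j)) /\
  (forall (i j : 'I_n) (Q : {set 'I_n * 'I_n}) (a : 'I_n * 'I_n -> bool),
     (forall q, q \in Q -> prec q (i, j)) ->
     let Ev := fun w => [forall q in Q, xi q.1 q.2 w == a q] in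
     0 < P Ev ->
     p <= P (fun w => xi i j w && Ev w) / P Ev).

Definition skel (N n k : nat) (E : seq {set 'I_N}) (i j : 'I_n)
  (w : Omega N n) : bool :=
  indep (take k.+1 E) (Xent (take k E) w i j).

(* Main.v *)
Require Import Defs.
From mathcomp Require Import all_boot all_order all_algebra ring.
Set Implicit Arguments. Unset Strict Implicit.
Import Order.TTheory GRing.Theory Num.Theory.
Local Open Scope ring_scope.

Definition upd (N n : nat) (i j : 'I_n) (f : 'I_N -> 'I_N) (w : Omega N n)
  : Omega N n :=
  (w.1, [ffun q => if q == (i, j) then f (w.2 q) else w.2 q]).

Lemma foldl_dep (N n : nat) (E : seq {set 'I_N}) (f g : 'I_n -> 'I_N) s X :
  {in s, f =1 g} ->
  foldl (fun X l => bidc_step E X (f l)) X s =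
  foldl (fun X l => bidc_step E X (g l)) X s.
Proof.
elim: s X => [X _ //|a s IH X H] /=.
rewrite H ?mem_head //; apply: IH => x xs; by apply: H; rewrite inE xs orbT.
Qed.

Lemma indep_step (N : nat) (E : seq {set 'I_N}) X u :
  indep E X -> indep E (bidc_step E X u).
Proof.
rewrite /bidc_step; case: ifP => // _ HX.
  apply/allP => e eE; apply/negP => sub.
  move/allP: HX => /(_ e eE) /negP; apply.
  exact: subset_trans sub (subsetDl _ _).
by case: ifP.
Qed.

Lemma indep_fold (N n : nat) (E : seq {set 'I_N}) (f : 'I_n -> 'I_N) s X :
  indep E X -> indep E (foldl (fun X l => bidc_step E X (f l)) X s).
Proof.
elim: s X => //= a s IH X H; apply: IH; exact: indep_step.
Qed.

Lemma step_sub (N : nat) (E : seq {set 'I_N}) X u :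
  bidc_step E X u \subset u |: X.
Proof.
rewrite /bidc_step; case: ifP => _.
  exact: subset_trans (subsetDl _ _) (subsetUr _ _).
by case: ifP => _; rewrite ?subxx ?subsetUr.
Qed.

Lemma filter_le (n : nat) (j : 'I_n) :
  [seq l <- enum 'I_n | (nat_of_ord l <= nat_of_ord j)%N] =
  rcons [seq l <- enum 'I_n | (nat_of_ord l < nat_of_ord j)%N] j.
Proof.
apply: (inj_map val_inj); rewrite map_rcons.
have e1 : forall P : pred nat, [seq \val x | x <- enum 'I_n & P (val x)] =
   [seq x <- iota 0 n | P x].
  by move=> P; rewrite -val_enum_ord filter_map.
rewrite (e1 (fun x => x <= j)%N) (e1 (fun x => x < j)%N).
rewrite (filter_iota_leq 0 (ltn_ord j)) (filter_iota_ltn 0 (ltnW (ltn_ord j))).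
by rewrite -cats1 -[RHS]/(iota 0 j ++ iota (0 + j) 1) -iotaD addn1.
Qed.

Lemma count_good (N : nat) (E : seq {set 'I_N}) (e Y : {set 'I_N}) :
  (3 <= N)%N -> #|e| = 2%N ->
  (2 <= #|[set u | ~~ (e \subset bidc_step E Y u)]|)%N.
Proof.
move=> N3 /eqP/cards2P [a [b [ab ->]]].
have gen : forall c, c \in [set a; b] -> c \notin Y ->
   (2 <= #|[set u | ~~ ([set a; b] \subset bidc_step E Y u)]|)%N.
  move=> c cab cY.
  apply: (leq_trans _ (subset_leq_card (_ : [set~ c] \subset _))).
    by rewrite cardsC1 card_ord; move: N3; case: (N) => [|[|[|?]]].
  apply/subsetP => u; rewrite !inE => uc; apply/negP => sub.
  have : c \in bidc_step E Y u by apply: (subsetP sub).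
  move/(subsetP (@step_sub _ E Y u)); rewrite !inE (negbTE cY) orbF.
  by rewrite eq_sym (negbTE uc).
case: (boolP (a \in Y)) => aY; last by apply: (gen a) => //; rewrite !inE eqxx.
case: (boolP (b \in Y)) => bY; last by apply: (gen b) => //; rewrite !inE eqxx orbT.
have rem : forall c, c \in Y -> c \in [set a; b] ->
   c \in [set u | ~~ ([set a; b] \subset bidc_step E Y u)].
  move=> c cY cab; rewrite inE /bidc_step cY; apply/negP => /subsetP /(_ c cab).
  by rewrite !inE eqxx.
apply: (leq_trans _ (subset_leq_card (_ : [set a; b] \subset _))).
  by rewrite cards2 ab.
apply/subsetP => c cab.
by apply: rem => //; move: cab; rewrite !inE => /orP [] /eqP ->.
Qed.

Definition Yst (N n : nat) (E : seq {set 'I_N}) (w : Omega N n) (i j : 'I_n) :=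
  foldl (fun (X : {set 'I_N}) (l : 'I_n) => bidc_step E X (w.2 (i, l))) (w.1 i)
        [seq l <- enum 'I_n | (nat_of_ord l < nat_of_ord j)%N].

Lemma Xent_dep (N n : nat) (E : seq {set 'I_N}) (w w' : Omega N n) (i j : 'I_n) :
  w.1 i = w'.1 i -> (forall l : 'I_n, (nat_of_ord l <= nat_of_ord j)%N -> w.2 (i, l) = w'.2 (i, l)) ->
  Xent E w i j = Xent E w' i j.
Proof.
move=> H1 H2; rewrite /Xent H1.
apply: (@foldl_dep _ _ E (fun l => w.2 (i, l)) (fun l => w'.2 (i, l))) => l.
by rewrite mem_filter => /andP [hl _]; apply: H2.
Qed.

Lemma Xent_last (N n : nat) (E : seq {set 'I_N}) (w : Omega N n) (i j : 'I_n) :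
  Xent E w i j = bidc_step E (Yst E w i j) (w.2 (i, j)).
Proof. by rewrite /Xent filter_le foldl_rcons. Qed.

Lemma Yst_upd (N n : nat) (E : seq {set 'I_N}) (w : Omega N n) (i j : 'I_n) f :
  Yst E (upd i j f w) i j = Yst E w i j.
Proof.
rewrite /Yst /=.
apply: (@foldl_dep _ _ E (fun l => (upd i j f w).2 (i, l)) (fun l => w.2 (i, l))) => l.
rewrite mem_filter => /andP [hl _] /=; rewrite ffunE.
case: eqP => // -[el]; by rewrite el ltnn in hl.
Qed.

Lemma skel_prec (N n k : nat) (E : seq {set 'I_N}) (w : Omega N n) (i j : 'I_n) f q :
  prec q (i, j) -> skel k E q.1 q.2 (upd i j f w) = skel k E q.1 q.2 w.
Proof.
move=> Hp; rewrite /skel (@Xent_dep _ _ _ (upd i j f w) w) //.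
move=> l hl /=; rewrite ffunE; case: eqP => // -[e1 e2].
move: Hp; rewrite /prec /= -e1 -e2 ltnn eqxx /=.
by rewrite ltnNge hl.
Qed.

Lemma upd_inj (N n : nat) (i j : 'I_n) (f : 'I_N -> 'I_N) :
  injective f -> injective (upd i j f).
Proof.
move=> fi [w1 w2] [w1' w2'] H.
have e1 : w1 = w1' by move: (congr1 fst H).
have e2 : w2 = w2'.
  apply/ffunP => q; move: (congr1 (fun z : Omega N n => z.2 q) H) => /=.
  rewrite !ffunE; case: eqP => _ //; exact: fi.
by rewrite e1 e2.
Qed.

Lemma key (R : realFieldType) (N' : nat) (E : seq {set 'I_N'.+1}) (k n : nat)
  (mu : {ffun {ffun 'I_n -> {set 'I_N'.+1}} -> R}) (i j : 'I_n)
  (Ev : pred (Omega N'.+1 n)) :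
  (3 <= N'.+1)%N -> #|nth set0 E k| = 2%N -> (k < size E)%N ->
  (forall A, 0 <= mu A) ->
  (forall A, mu A != 0 -> forall i, indep (take k E) (A i)) ->
  (forall f w, Ev (upd i j f w) = Ev w) ->
  2 * Pr mu Ev <= N'.+1%:R * Pr mu (fun w => skel k E i j w && Ev w).
Proof.
move=> N3 e2 kE mu0 muI EvI.
rewrite /Pr.
set c := (_ ^+ _)^-1.
have c0 : 0 <= c by rewrite invr_ge0 exprn_ge0 // ler0n.
set S := (X in _ <= _ * X).
have -> : N'.+1%:R * S = \sum_(v < N'.+1) S by rewrite sumr_const card_ord mulr_natl.
rewrite {}/S.
rewrite (eq_bigr (fun v : 'I_N'.+1 => \sum_w mu (upd i j (fun x => x + v) w).1 * c *
   (skel k E i j (upd i j (fun x => x + v) w) && Ev (upd i j (fun x => x + v) w))%:R));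
  last first.
  move=> v _; rewrite (reindex_inj (upd_inj (i:=i) (j:=j) (addIr v))) /=; done.
rewrite exchange_big /= mulr_sumr; apply: ler_sum => w _.
set e := nth set0 E k.
set Y := Yst (take k E) w i j.
have -> : \sum_(v < N'.+1) mu (upd i j (fun x => x + v) w).1 * c *
   (skel k E i j (upd i j (fun x => x + v) w) && Ev (upd i j (fun x => x + v) w))%:R
   = \sum_(v < N'.+1) mu w.1 * c * (Ev w)%:R *
       (~~ (e \subset bidc_step (take k E) Y (w.2 (i, j) + v)) &&
        indep (take k E) (bidc_step (take k E) Y (w.2 (i, j) + v)))%:R.
  apply: eq_bigr => v _; rewrite EvI /skel Xent_last Yst_upd /upd /= ffunE eqxx.
  rewrite (take_nth set0 kE) /indep all_rcons -/e -/Y.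
  move: (~~ _) (all _ _) (Ev w) => [] [] []; by rewrite /= ?(mulr0, mulr1).
have [mz|mnz] := eqVneq (mu w.1) 0.
  by rewrite mz !mul0r mulr0 big1 // => v _; rewrite !mul0r.
have YI : indep (take k E) Y by apply: indep_fold; apply: muI.
rewrite -mulr_sumr [X in _ <= X]mulrC; apply: ler_wpM2r.
  by rewrite mulr_ge0 ?ler0n // mulr_ge0.
rewrite (eq_bigr (fun v => (~~ (e \subset bidc_step (take k E) Y (w.2 (i, j) + v)) : nat)%:R));
  last by move=> v _; rewrite indep_step // andbT.
have -> : \sum_(v < N'.+1) (~~ (e \subset bidc_step (take k E) Y (w.2 (i, j) + v)) : nat)%:R
   = \sum_(u < N'.+1) (~~ (e \subset bidc_step (take k E) Y u) : nat)%:R :> R.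
  by rewrite [RHS](reindex_inj (addrI (w.2 (i, j)))).
rewrite -natr_sum ler_nat.
have -> : (\sum_(u < N'.+1) (~~ (e \subset bidc_step (take k E) Y u) : nat))%N =
   #|[set u | ~~ (e \subset bidc_step (take k E) Y u)]|.
  rewrite -sum1_card [RHS]big_mkcond /=; apply: eq_bigr => u _; rewrite inE.
  by case: (~~ _).
exact: count_good.
Qed.

Lemma Pr_T (R : realFieldType) (N n : nat) (mu : {ffun {ffun 'I_n -> {set 'I_N}} -> R}) :
  (0 < N)%N -> \sum_A mu A = 1 -> Pr mu (fun _ => true) = 1.
Proof.
move=> N0 s1; rewrite /Pr.
set c := (_ ^+ _)^-1.
rewrite (eq_bigr (fun w : Omega N n => mu w.1 * c)); last by move=> w _; rewrite mulr1.
rewrite -(pair_bigA _ (fun A (u : {ffun 'I_n * 'I_n -> 'I_N}) => mu A * c)) /=.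
rewrite (eq_bigr (fun A => mu A * c *+ (N ^ (n * n)))); last first.
  by move=> A _; rewrite sumr_const card_ffun card_prod !card_ord.
rewrite (eq_bigr (fun A => mu A * c * (N ^ (n * n))%:R)); last by move=> A _; rewrite mulr_natr.
rewrite -mulr_suml -mulr_suml s1 mul1r /c natrX mulVf //.
by rewrite expf_neq0 // pnatr_eq0 -lt0n.
Qed.

Theorem lemma4 (R : realFieldType) (N : nat) (edges : seq {set 'I_N})
  (k n : nat) (mu : {ffun {ffun 'I_n -> {set 'I_N}} -> R}) :
  (4 <= N)%N ->
  (forall e, e \in edges -> #|e| = 2%N) -> uniq edges ->
  (k < size edges)%N -> (1 <= n)%N ->
  (forall A, 0 <= mu A) -> \sum_A mu A = 1 ->
  (forall A, mu A != 0 -> forall i, indep (take k edges) (A i)) ->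
  p_robust (Pr mu) (skel k edges) (2 / N%:R).
Proof.
case: N edges mu => [//|N'] edges mu N4 He _ kE _ mu0 s1 muI.
have N3 : (3 <= N'.+1)%N by apply: ltnW.
have e2 : #|nth set0 edges k| = 2%N by apply: He; apply: mem_nth.
have Np : 0 < N'.+1%:R :> R by rewrite ltr0n.
split.
  move=> i j.
  have := @key R N' edges k n mu i j (fun _ => true) N3 e2 kE mu0 muI (fun _ _ => erefl).
  rewrite Pr_T // mulr1 => H.
  rewrite ler_pdivrMr // mulrC.
  apply: (le_trans H); rewrite le_eqVlt; apply/orP; left; apply/eqP.
  by rewrite /Pr; congr (_ * _); apply: eq_bigr => w _; rewrite andbT.
move=> i j Q a HQ Ev PEv.
have EvI : forall f w, Ev (upd i j f w) = Ev w.
  move=> f w; rewrite /Ev; apply: eq_forallb => q.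
  by case: (boolP (q \in Q)) => //= qQ; rewrite skel_prec // HQ.
have := @key R N' edges k n mu i j Ev N3 e2 kE mu0 muI EvI.
move=> H; rewrite ler_pdivlMr // mulrAC ler_pdivrMr // [X in _ <= X]mulrC //.
Qed.
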